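(* Let $S$ be a numerical semigroup of depth $q\ge 1$, with $\rho=qm-c$. For all $x,y\in S$, $$\delta(x+y)+q+1\ \ge\ \delta(x)+\delta(y)\ \ge\ \delta(x+y)+q-\min(\rho,1).$$
   Context: A numerical semigroup is a subset $S\subseteq\mathbb N$ containing $0$, closed under addition, with finite complement. Its multiplicity is $m=\min(S\setminus\{0\})$, its conductor is $c=\max(\mathbb Z\setminus S)+1$, its depth is $q=\lceil c/m\rceil$, and $\rho=qm-c\in[0,m)$. For $x\in S$, the depth $\delta(x)$ is the unique integer such that $x+\delta(x)m\in[c,c+m-1]$. *)

(* Defs.v *)
From mathcomp Require Import all_boot all_order all_algebra.
Set Implicit Arguments. Unset Strict Implicit. Unset Printing Implicit Defensive.
Import Order.TTheory GRing.Theory Num.Theory.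

Definition numerical_semigroup (S : pred nat) : Prop :=
  [/\ S 0%N,
      (forall x y, S x -> S y -> S (x + y)%N) &
      exists N, forall n, (N <= n)%N -> S n].

Definition is_multiplicity (S : pred nat) (m : nat) : Prop :=
  [/\ (0 < m)%N, S m & forall k, (0 < k < m)%N -> ~~ S k].

(* c = max (Z \ S) + 1, i.e. the least integer c >= 0 with [c, oo) inside S
   (c = 0 when S = N, since then max (Z \ S) = -1). *)
Definition is_conductor (S : pred nat) (c : nat) : Prop :=
  (forall n, (c <= n)%N -> S n) /\ ((0 < c)%N -> ~~ S c.-1).

(* depth q = ceil (c / m), for m > 0 *)
Definition sg_depth (m c : nat) : nat := ((c + m).-1 %/ m)%N.

Definition sg_rho (m c : nat) : nat := (sg_depth m c * m - c)%N.

Definition is_elt_depth (m c x : nat) (d : int) : Prop :=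
  ((c%:Z <= x%:Z + d * m%:Z) /\ (x%:Z + d * m%:Z <= c%:Z + m%:Z - 1))%R.

(* Main.v *)
Require Import Defs.
From mathcomp Require Import all_boot all_order all_algebra.
From mathcomp Require Import zify ring.
Import Order.TTheory GRing.Theory Num.Theory.
Local Open Scope ring_scope.

Theorem proposition2p5 (S : pred nat) (m c : nat)
  (hS : numerical_semigroup S) (hm : is_multiplicity S m) (hc : is_conductor S c)
  (hq : (1 <= sg_depth m c)%N)
  (x y : nat) (dx dy dxy : int)
  (hx : S x) (hy : S y)
  (hdx : is_elt_depth m c x dx) (hdy : is_elt_depth m c y dy)
  (hdxy : is_elt_depth m c (x + y) dxy) :
  dx + dy <= dxy + (sg_depth m c)%:Z + 1 /\
  dxy + (sg_depth m c)%:Z - (minn (sg_rho m c) 1)%:Z <= dx + dy.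
Proof.
case: hm => m0 _ _.
have hq1 : (sg_depth m c * m <= (c + m).-1)%N by rewrite /sg_depth leq_divM.
have hq2 : ((c + m).-1 < sg_depth m c * m + m)%N.
  by rewrite /sg_depth -mulSnr ltn_ceil.
have hrho : sg_rho m c = (sg_depth m c * m - c)%N by [].
rewrite hrho.
move: hq1 hq2 hq; set q := sg_depth m c => hq1 hq2 hq.
case: hdx hdy hdxy => [a1 a2] [b1 b2] [e1 e2].
set k := dx + dy - dxy.
have hk : dx + dy = dxy + k by rewrite /k; ring.
rewrite hk.
have kl : c%:Z - m%:Z + 1 <= k * m%:Z.
  have -> : k * m%:Z = (x%:Z + dx * m%:Z) + (y%:Z + dy * m%:Z) - ((x + y)%:Z + dxy * m%:Z).
    rewrite /k PoszD; ring.
  lia.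
have ku : k * m%:Z <= c%:Z + 2 * m%:Z - 2.
  have -> : k * m%:Z = (x%:Z + dx * m%:Z) + (y%:Z + dy * m%:Z) - ((x + y)%:Z + dxy * m%:Z).
    rewrite /k PoszD; ring.
  lia.
clearbody k; clear hk a1 a2 b1 b2 e1 e2.
split.
  have : k <= q%:Z + 1 by nia.
  lia.
case: (leqP (q * m - c) 0) => h0.
  have : q%:Z <= k by nia.
  lia.
have : q%:Z - 1 <= k by nia.
lia.
Qed.
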